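(* Let $\mathcal Z$ be an arbitrary set and $\mathcal H\subseteq\{0,1\}^{\mathcal Z}$ contain the all-zero function. Assume $c_{\mathrm{ver}}\ge c_{\mathrm{rew}}>0$. Then for every $h^\star\in\mathcal H$ and every probability distribution $\mathcal D$ on $\mathcal Z$ with $\Pr_{Z\sim\mathcal D}(h^\star(Z)=1)>0$, the policy $\mathcal A_{\mathrm{CS}}$ described in the context is sound and satisfies \[ \mathbb E\big[J(\mathcal A_{\mathrm{CS}};h^\star,\mathcal D)\big]\le 6\min\Big\{\mathfrak s_0(\mathcal H),\frac{c_{\mathrm{ver}}}{c_{\mathrm{rew}}}\Big\}\,J^\star(h^\star,\mathcal D). \]
   Context: Centered star number: $\mathfrak s_0(\mathcal H)$ is the largest $m\in\mathbb N$ such that there exist $z_1,\dots,z_m\in\mathcal Z$ and $h_1,\dots,h_m\in\mathcal H$ with $h_i(z_j)=\mathbf 1\{i=j\}$; it is $\infty$ if no finite maximum exists. Binary active search: an instance is $(h^\star,\mathcal D)$ with $h^\star\in\mathcal H$, $\mathcal D$ a distribution on $\mathcal Z$. A policy knows $\mathcal H$ and the costs but not $(h^\star,\mathcal D)$; it keeps a pool of generated unverified points and at each step either generates a fresh $Z\sim\mathcal D$ (cost $c_{\mathrm{rew}}$, $Z$ observed) or verifies a pool point $Z$ (cost $c_{\mathrm{ver}}$, observes $h^\star(Z)$, removes $Z$; stops and outputs $Z$ if the label is $1$). Sound: stops only on observing label $1$. Cost $J=c_{\mathrm{rew}}N_{\mathrm{rew}}+c_{\mathrm{ver}}N_{\mathrm{ver}}$,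 $+\infty$ if no positive observed. $J^\star(h^\star,\mathcal D)$ is the infimum of expected cost over such policies that also know $(h^\star,\mathcal D)$. Policy $\mathcal A_{\mathrm{CS}}$: If $\mathfrak s_0(\mathcal H)>c_{\mathrm{ver}}/c_{\mathrm{rew}}$, repeat: generate $Z\sim\mathcal D$, verify $Z$, return $Z$ if its label is $1$. Otherwise let $n=\lceil (c_{\mathrm{ver}}/c_{\mathrm{rew}})\mathfrak s_0(\mathcal H)\rceil$ and repeat: generate $Z_1,\dots,Z_n$ i.i.d. from $\mathcal D$; for each $h\in\mathcal H$ let $A_h=\{i\in[n]:h(Z_i)=1\}$; choose a minimum-cardinality set $I\subseteq[n]$ with $I\cap A_h\neq\emptyset$ for all $h\in\mathcal H$ with $A_h\ne\emptyset$; verify $Z_i$ for each $i\in I$, returning the first one with label $1$. *)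

(* Defs.v *)
From HB Require Import structures.
From mathcomp Require Import all_boot all_order all_algebra.
From mathcomp Require Import all_classical all_reals all_analysis.

Set Implicit Arguments.
Unset Strict Implicit.
Unset Printing Implicit Defensive.

Import Order.TTheory GRing.Theory Num.Theory.
Local Open Scope classical_set_scope.
Local Open Scope ring_scope.

Definition is_star (Z : Type) (H : set (Z -> bool)) (m : nat) : Prop :=
  exists (z : 'I_m -> Z) (h : 'I_m -> Z -> bool),
    (forall i, H (h i)) /\ (forall i j, h i (z j) = (i == j)).

(** s_0(H) as an extended real: the supremum of the admissible m
    (the admissible set is downward closed and contains 0, so this is the
    largest such m when it exists, and +oo otherwise). *)
Definition star_number (R : realType) (Z : Type) (H : set (Z -> bool))
  : \bar R :=
  ereal_sup [set ((m%:R : R)%:E) | m in [set m : nat | is_star H m]].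

(** Observations made by a policy: a generated point (observed), or the
    result of verifying the point generated at (global, 0-based)
    generation index k. *)
Inductive obs (Z : Type) := OGen of Z | OVer of nat & bool.
Arguments OGen {Z}.
Arguments OVer {Z}.

Inductive act := AGen | AVer of nat.

Definition policy (Z : Type) := seq (obs Z) -> act.

Record pstate (Z : Type) := PState {
  ps_hist : seq (obs Z);
  ps_ngen : nat;
  ps_nver : nat;
  ps_done : seq nat;
  ps_stop : bool;
  ps_dead : bool           (* an illegal action was taken: never stops *)
}.

Definition init_state (Z : Type) : pstate Z := PState [::] 0 0 [::] false false.

(** One step of the interaction. [s k] is the k-th generated point
    (the i.i.d. sample stream) and [f] is the true labeling h*. *)
Definition pstep (Z : Type) (pi : policy Z) (s : nat -> Z) (f : Z -> bool)
    (st : pstate Z) : pstate Z :=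
  if ps_stop st || ps_dead st then st else
  match pi (ps_hist st) with
  | AGen => PState (rcons (ps_hist st) (OGen (s (ps_ngen st))))
                   (ps_ngen st).+1 (ps_nver st) (ps_done st) false false
  | AVer k =>
      if (k < ps_ngen st)%N && (k \notin ps_done st) then
        PState (rcons (ps_hist st) (OVer k (f (s k))))
               (ps_ngen st) (ps_nver st).+1 (k :: ps_done st) (f (s k)) false
      else PState (ps_hist st) (ps_ngen st) (ps_nver st) (ps_done st) false true
  end.

Definition state_at (Z : Type) (pi : policy Z) (s : nat -> Z) (f : Z -> bool)
    (t : nat) : pstate Z :=
  iter t (pstep pi s f) (init_state Z).

(** Cost J = c_rew N_rew + c_ver N_ver at the stopping time, +oo if the
    policy never observes a positive label. *)
Definition cost (R : realType) (Z : Type) (crew cver : R) (pi : policy Z)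
    (s : nat -> Z) (f : Z -> bool) : \bar R :=
  ereal_inf (range (fun t : nat =>
    let st := state_at pi s f t in
    if ps_stop st
    then (crew * (ps_ngen st)%:R + cver * (ps_nver st)%:R)%:E
    else +oo%E)).

Definition mutually_independent (R : realType) (d dO : measure_display)
    (Z : measurableType d) (Omega : measurableType dO)
    (P : probability Omega R) (X : nat -> Omega -> Z) : Prop :=
  forall (n : nat) (k : 'I_n -> nat), injective k ->
  forall A : 'I_n -> set Z, (forall i, measurable (A i)) ->
    P (\bigcap_(i in [set: 'I_n]) (X (k i) @^-1` A i)) =
    (\prod_(i < n) P (X (k i) @^-1` A i))%E.

Definition exp_cost (R : realType) (dO : measure_display) (Z : Type)
    (Omega : measurableType dO) (P : probability Omega R)
    (X : nat -> Omega -> Z) (crew cver : R) (pi : policy Z) (f : Z -> bool)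
    : \bar R :=
  (\int[P]_w cost crew cver pi (fun k => X k w) f)%E.

(** J*(h*, D): infimum of the expected cost over all policies (which may
    depend arbitrarily on h* and D). *)
Definition Jstar (R : realType) (dO : measure_display) (Z : Type)
    (Omega : measurableType dO) (P : probability Omega R)
    (X : nat -> Omega -> Z) (crew cver : R) (f : Z -> bool) : \bar R :=
  ereal_inf [set exp_cost P X crew cver pi f | pi in [set: policy Z]].

(** label of the i-th point of [pts] under h (false beyond the end). *)
Definition lab (Z : Type) (h : Z -> bool) (pts : seq Z) (i : nat) : bool :=
  if drop i pts is z :: _ then h z else false.

Definition hitting (Z : Type) (H : set (Z -> bool)) (pts : seq Z)
    (I : seq nat) : Prop :=
  forall h, H h -> (exists i, lab h pts i) -> exists2 i, i \in I & lab h pts i.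

(** [I] (listed without repetition, in verification order) is a
    minimum-cardinality hitting set contained in [size pts]. *)
Definition min_hitting (Z : Type) (H : set (Z -> bool)) (pts : seq Z)
    (I : seq nat) : Prop :=
  [/\ uniq I, all (fun i => (i < size pts)%N) I, hitting H pts I &
      forall I' : seq nat, uniq I' -> all (fun i => (i < size pts)%N) I' ->
        hitting H pts I' -> (size I <= size I')%N].

Definition gens (Z : Type) (hs : seq (obs Z)) : seq Z :=
  pmap (fun o => if o is OGen z then Some z else None) hs.

Definition is_gen (Z : Type) (o : obs Z) : bool :=
  if o is OGen _ then true else false.

(** block size n = ceil((c_ver/c_rew) s_0(H)) (used only when s_0 is finite) *)
Definition cs_n (R : realType) (Z : Type) (H : set (Z -> bool)) (crew cver : R)
  : nat := `|Num.ceil (cver / crew * fine (star_number R H))|%N.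

(** A_CS, with the choice of minimum hitting set and of the verification
    order given by [sel]. *)
Definition ACS (R : realType) (Z : Type) (H : set (Z -> bool)) (crew cver : R)
    (sel : seq Z -> seq nat) : policy Z := fun hs =>
  if ((cver / crew)%:E < star_number R H)%E then
    (* generate Z, verify Z, repeat *)
    if last (OVer 0 false) hs is OGen _ then AVer (count (@is_gen Z) hs).-1
    else AGen
  else
    let n := cs_n H crew cver in
    let g := count (@is_gen Z) hs in
    if (g == 0)%N || (g %% n != 0)%N then AGen else
    let pts := drop (g - n) (gens hs) in
    let L := sel pts in
    let m := find (@is_gen Z) (rev hs) in
    if (m < size L)%N then AVer (g - n + nth 0 L m) else AGen.

(* Main.v *)
Require Import Defs.
From HB Require Import structures.
From mathcomp Require Import all_boot all_order all_algebra.
From mathcomp Require Import all_classical all_reals all_analysis.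
From mathcomp Require Import ring lra.
From Stdlib Require Import Classical.

Import Order.TTheory GRing.Theory Num.Theory.
Local Open Scope classical_set_scope.
Local Open Scope ring_scope.

Set Implicit Arguments.
Unset Strict Implicit.


Section Sim.
Variables (Z : Type) (pi : policy Z) (s : nat -> Z) (f : Z -> bool).

Lemma state_atS t : state_at pi s f t.+1 = pstep pi s f (state_at pi s f t).
Proof. by rewrite /state_at iterS. Qed.

Lemma stop_inv t : ps_stop (state_at pi s f t) ->
  (0 < ps_nver (state_at pi s f t))%N /\
  exists2 k, (k < ps_ngen (state_at pi s f t))%N & f (s k).
Proof.
elim: t => [//|t IH]; rewrite state_atS /pstep.
case: (state_at pi s f t) IH => hs g v dn st dd /= IH.
case: ifP => [_ //|/norP [st0 dd0]].
case: (pi hs) => [|k] //=.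
case: ifP => //= /andP [kg _] fk; split => //; by exists k.
Qed.

Lemma gens_rcons_gen (hs : seq (obs Z)) z : gens (rcons hs (OGen z)) = rcons (gens hs) z.
Proof. by rewrite /gens -cats1 pmap_cat cats1. Qed.

Lemma gens_rcons_ver (hs : seq (obs Z)) k b : gens (rcons hs (OVer k b)) = gens hs.
Proof. by rewrite /gens -cats1 pmap_cat cats0. Qed.

Lemma count_gens (hs : seq (obs Z)) : count (@is_gen Z) hs = size (gens hs).
Proof. by rewrite /gens size_pmap; apply: eq_count => -[]. Qed.

Lemma map_iotaS g : map s (iota 0 g.+1) = rcons (map s (iota 0 g)) (s g).
Proof. by rewrite -addn1 iotaD map_cat cats1. Qed.

End Sim.

Section Branch1.
Variables (R : realType) (Z : Type) (H : set (Z -> bool)) (crew cver : R)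
  (sel : seq Z -> seq nat) (s : nat -> Z) (f : Z -> bool).
Hypothesis hc : ((cver / crew)%:E < star_number R H)%E.
Let pol := ACS H crew cver sel.

Lemma acs1_step j hs dn :
  state_at pol s f (2*j) = PState hs j j dn false false ->
  count (@is_gen Z) hs = j -> ~~ is_gen (last (OVer 0 false) hs) ->
  all (fun x => x < j)%N dn ->
  state_at pol s f (2*j.+1) = PState (rcons (rcons hs (OGen (s j))) (OVer j (f (s j))))
     j.+1 j.+1 (j :: dn) (f (s j)) false.
Proof.
move=> e c l a.
have p1 : pol hs = AGen by rewrite /pol /ACS hc; case: (last _ hs) l.
have cr : count (@is_gen Z) (rcons hs (OGen (s j))) = j.+1.
  by rewrite -cats1 count_cat c /= addn1.
have p2 : pol (rcons hs (OGen (s j))) = AVer j.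
  by rewrite /pol /ACS hc last_rcons cr.
rewrite mulnS add2n !state_atS e /pstep /= p1 /= p2 /= ltnSn /=.
have -> : (j \notin dn) by apply/negP => /(allP a); rewrite ltnn.
by [].
Qed.

Lemma acs1 j : (forall i, (i < j)%N -> ~~ f (s i)) ->
  exists hs dn, [/\ state_at pol s f (2*j) = PState hs j j dn false false,
      count (@is_gen Z) hs = j, ~~ is_gen (last (OVer 0 false) hs) &
      all (fun x => x < j)%N dn].
Proof.
elim: j => [_|j IH hneg]; first by exists [::], [::].
have [hs [dn [e c l a]]] := IH (fun i hi => hneg i (ltnW (leq_trans hi (leqnn _)))).
have fj : f (s j) = false by apply/negbTE/hneg.
have cr : count (@is_gen Z) (rcons hs (OGen (s j))) = j.+1.
  by rewrite -cats1 count_cat c /= addn1.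
exists (rcons (rcons hs (OGen (s j))) (OVer j (f (s j)))), (j :: dn).
rewrite (acs1_step e c l a) fj; split; try done.
- by rewrite -[X in count _ X]cats1 count_cat cr /= !addn0.
- by rewrite last_rcons.
- by rewrite /= ltnSn; apply: sub_all a => x hx; apply: ltnW.
Qed.

End Branch1.

Lemma lab_blk (Z : Type) (h : Z -> bool) (s : nat -> Z) a n i :
  lab h (map s (iota a n)) i = (i < n)%N && h (s (a + i)%N).
Proof.
rewrite /lab -map_drop drop_iota.
have [lt|ge] := ltnP i n.
  by rewrite -(subnSK lt) /=.
by move: ge; rewrite -subn_eq0 => /eqP ->.
Qed.

Section Branch2.
Variables (R : realType) (Z : Type) (H : set (Z -> bool)) (crew cver : R)
  (sel : seq Z -> seq nat) (s : nat -> Z) (f : Z -> bool).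
Hypothesis hc : ~~ ((cver / crew)%:E < star_number R H)%E.
Let pol := ACS H crew cver sel.
Let n := cs_n H crew cver.
Hypothesis n_gt0 : (0 < n)%N.
Hypothesis hsel : forall pts, min_hitting H pts (sel pts).

Definition blk b := map s (iota (b * n) n).
Definition LL b := sel (blk b).

Definition good g v (hs : seq (obs Z)) dn (st : pstate Z) :=
  [/\ st = PState hs g v dn false false, gens hs = map s (iota 0 g) &
      all (fun x => x < g)%N dn].

Lemma drop_blk b : drop (b * n) (map s (iota 0 (b.+1 * n))) = blk b.
Proof.
by rewrite -map_drop drop_iota add0n mulSn addnK /blk.
Qed.

Lemma polE hs : pol hs =
    let g := count (@is_gen Z) hs in
    if (g == 0)%N || (g %% n != 0)%N then AGen else
    let pts := drop (g - n) (gens hs) in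
    let L := sel pts in
    let m := find (@is_gen Z) (rev hs) in
    if (m < size L)%N then AVer (g - n + nth 0 L m) else AGen.
Proof. by rewrite /pol /ACS (negbTE hc). Qed.

Lemma gen_phase b t v hs dn :
  good (b * n) v hs dn (state_at pol s f t) ->
  (b = 0%N \/ (size (LL b.-1) <= find (@is_gen Z) (rev hs))%N) ->
  forall i, (i <= n)%N -> exists hs',
    good (b * n + i) v hs' dn (state_at pol s f (t + i)) /\
    (if i == 0%N then hs' = hs else find (@is_gen Z) (rev hs') = 0%N).
Proof.
move=> G0 hb; elim => [_|i IH hi].
  by exists hs; rewrite !addn0.
have [hs' [[e gs a] hh]] := IH (ltnW hi).
have cg : count (@is_gen Z) hs' = (b * n + i)%N by rewrite count_gens gs size_map size_iota.
have p : pol hs' = AGen.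
  rewrite polE /= cg.
  case: (eqVneq i 0%N) hh => [-> /= ->|i0 _].
    case: hb => [-> //|hb]; rewrite addn0.
    case: (eqVneq b 0%N) => [-> |b0]; first by rewrite mul0n.
    case: G0 => _ gs0 _.
    rewrite gs0 muln_eq0 (negbTE b0) /= eqn0Ngt n_gt0 /= modnMl /=.
    move: hb; have -> : b = b.-1.+1 by rewrite prednK // lt0n.
    rewrite /= mulSn addKn -mulSn drop_blk /LL => hb.
    by rewrite ltnNge hb.
  rewrite modnMDl modn_small //.
  by rewrite (negbTE i0) orbT.
exists (rcons hs' (OGen (s (b * n + i)))); split; last by rewrite rev_rcons.
rewrite !addnS state_atS e /pstep /= p; split => //.
  by rewrite gens_rcons_gen gs map_iotaS.
by apply: sub_all a => x hx; apply: ltnW.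
Qed.


Lemma size_blk b : size (blk b) = n.
Proof. by rewrite /blk size_map size_iota. Qed.

Lemma LL_lt b j : (j < size (LL b))%N -> (nth 0 (LL b) j < n)%N.
Proof.
move=> hj; case: (hsel (blk b)) => _ al _ _.
by have := allP al _ (mem_nth 0 hj); rewrite size_blk.
Qed.

Lemma LL_uniq b : uniq (LL b).
Proof. by case: (hsel (blk b)). Qed.

Lemma ver_step b t m v hs dn :
  good (b.+1 * n) v hs dn (state_at pol s f t) ->
  find (@is_gen Z) (rev hs) = m -> (m < size (LL b))%N ->
  (forall x, x \in dn -> (x < b * n)%N \/ exists2 j, (j < m)%N & x = (b * n + nth 0 (LL b) j)%N) ->
  let k := (b * n + nth 0 (LL b) m)%N in
  (k < b.+1 * n)%N /\
  state_at pol s f t.+1 =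
    PState (rcons hs (OVer k (f (s k)))) (b.+1 * n) v.+1 (k :: dn) (f (s k)) false.
Proof.
case=> e gs a fm hm hdn k.
have kl : (k < b.+1 * n)%N by rewrite /k mulSnr ltn_add2l LL_lt.
split => //.
have cg : count (@is_gen Z) hs = (b.+1 * n)%N by rewrite count_gens gs size_map size_iota.
have p : pol hs = AVer k.
  rewrite polE /= cg muln_eq0 /= eqn0Ngt n_gt0 /= modnMl /=.
  have -> : (b.+1 * n - n = b * n)%N by rewrite mulSn addKn.
  by rewrite gs drop_blk fm -/(LL b) hm.
rewrite state_atS e /pstep /= p kl /=.
have -> : k \notin dn.
  apply/negP => /hdn [lt|[j jm ej]].
    by move: lt; rewrite /k ltnNge leq_addr.
  move/addnI: ej => /eqP; rewrite nth_uniq ?LL_uniq //; last exact: ltn_trans jm hm.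
  by move/eqP => ej; move: jm; rewrite ej ltnn.
by [].
Qed.

Lemma ver_phase b t v hs dn :
  good (b.+1 * n) v hs dn (state_at pol s f t) ->
  find (@is_gen Z) (rev hs) = 0%N -> all (fun x => x < b * n)%N dn ->
  forall m, (m <= size (LL b))%N ->
  (forall j, (j < m)%N -> ~~ f (s (b * n + nth 0 (LL b) j)%N)) ->
  exists hs' dn', [/\ good (b.+1 * n) (v + m) hs' dn' (state_at pol s f (t + m)),
    find (@is_gen Z) (rev hs') = m &
    forall x, x \in dn' -> (x < b * n)%N \/
       exists2 j, (j < m)%N & x = (b * n + nth 0 (LL b) j)%N].
Proof.
move=> G f0 a; elim => [_ _|m IH hm hneg].
  exists hs, dn; rewrite !addn0; split => // x /(allP a); by left.
have [hs' [dn' [G' fm hdn]]] := IH (ltnW hm) (fun j hj => hneg j (ltnW hj)).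
have [kl e] := ver_step G' fm hm hdn.
set k := (b * n + nth 0 (LL b) m)%N in kl e.
have fk : f (s k) = false by apply/negbTE/hneg.
exists (rcons hs' (OVer k false)), (k :: dn'); rewrite !addnS.
case: G' => _ gs a'.
split.
- split => //; first by rewrite e fk.
    by rewrite gens_rcons_ver.
  by rewrite /= kl.
- by rewrite rev_rcons /= fm.
- move=> x; rewrite inE => /orP [/eqP ->|/hdn [lt|[j jm ej]]].
  + by right; exists m.
  + by left.
  + by right; exists j => //; apply: ltnW.
Qed.

Hypothesis Hf : H f.

Lemma block_neg b t v hs dn :
  good (b * n) v hs dn (state_at pol s f t) ->
  (b = 0%N \/ (size (LL b.-1) <= find (@is_gen Z) (rev hs))%N) ->
  (forall i, (i < n)%N -> ~~ f (s (b * n + i)%N)) ->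
  exists t' hs' dn', good (b.+1 * n) (v + size (LL b)) hs' dn' (state_at pol s f t') /\
    (size (LL b) <= find (@is_gen Z) (rev hs'))%N.
Proof.
move=> G hb hneg.
have [hs1 [G1 f1]] := gen_phase G hb (leqnn n).
rewrite -mulSnr (negbTE (lt0n_neq0 n_gt0)) in G1 f1.
have a : all (fun x => x < b * n)%N dn by case: G.
have [hs2 [dn2 [G2 f2 _]]] := ver_phase G1 f1 a (leqnn _)
   (fun j hj => hneg _ (LL_lt hj)).
by exists (t + n + size (LL b))%N, hs2, dn2; rewrite f2.
Qed.

Lemma block_pos b t v hs dn :
  good (b * n) v hs dn (state_at pol s f t) ->
  (b = 0%N \/ (size (LL b.-1) <= find (@is_gen Z) (rev hs))%N) ->
  (exists2 i, (i < n)%N & f (s (b * n + i)%N)) ->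
  exists t', [/\ ps_stop (state_at pol s f t'),
    ps_ngen (state_at pol s f t') = (b.+1 * n)%N &
    (ps_nver (state_at pol s f t') <= v + size (LL b))%N].
Proof.
move=> G hb [i0 hi0 fi0].
have [hs1 [G1 f1]] := gen_phase G hb (leqnn n).
rewrite -mulSnr (negbTE (lt0n_neq0 n_gt0)) in G1 f1.
have a : all (fun x => x < b * n)%N dn by case: G.
case: (hsel (blk b)) => _ _ hit _.
have [|j jL lj] := hit f Hf.
  by exists i0; rewrite /blk lab_blk hi0.
rewrite /blk lab_blk in lj; case/andP: lj => jn fj.
pose P := fun m => (m < size (LL b))%N && f (s (b * n + nth 0 (LL b) m)%N).
have exP : exists m, P m.
  by exists (index j (LL b)); rewrite /P index_mem jL nth_index.
case: (ex_minnP exP) => m0 /andP [m0s fm0] mmin.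
have hneg : forall j, (j < m0)%N -> ~~ f (s (b * n + nth 0 (LL b) j)%N).
  move=> j' hj'; apply/negP => fj'.
  have : (m0 <= j')%N by apply: mmin; rewrite /P fj' (ltn_trans hj' m0s).
  by rewrite leqNgt hj'.
have [hs2 [dn2 [G2 f2 hdn]]] := ver_phase G1 f1 a (ltnW m0s) hneg.
have [_ e] := ver_step G2 f2 m0s hdn.
exists (t + n + m0).+1; rewrite e /=; split => //.
by rewrite -addnS leq_add2l.
Qed.

Variable S : R.
Hypothesis hS : forall pts, ((size (sel pts))%:R <= S :> R).

Lemma blocks b : (forall i, (i < b * n)%N -> ~~ f (s i)) ->
  exists t v hs dn, [/\ good (b * n) v hs dn (state_at pol s f t),
    (v%:R <= b%:R * S :> R) &
    (b = 0%N \/ (size (LL b.-1) <= find (@is_gen Z) (rev hs))%N)].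
Proof.
elim: b => [_|b IH hneg].
  exists 0%N, 0%N, [::], [::]; split => //; last by left.
  by rewrite mul0r.
have [|t [v [hs [dn [G hv hb]]]]] := IH.
  move=> i hi; apply: hneg; apply: leq_trans hi _; rewrite leq_mul2r leqnSn orbT //.
have [|t' [hs' [dn' [G' hb']]]] := block_neg G hb.
  move=> i hi; apply: hneg; by rewrite mulSnr ltn_add2l.
exists t', (v + size (LL b))%N, hs', dn'; split => //; last by right.
rewrite natrD -addn1 natrD mulrDl mul1r; apply: lerD => //; exact: hS.
Qed.

Lemma acs2_stop T0 : f (s T0) ->
  exists B t, [/\ (forall i, (i < B * n)%N -> ~~ f (s i)),
    ps_stop (state_at pol s f t),
    ps_ngen (state_at pol s f t) = (B.+1 * n)%N &
    ((ps_nver (state_at pol s f t))%:R <= B.+1%:R * S :> R)].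
Proof.
move=> fT0.
have exT : exists i, f (s i) by exists T0.
case: (ex_minnP exT) => T1 fT1 Tmin.
set B := (T1 %/ n)%N.
have negB : forall i, (i < B * n)%N -> ~~ f (s i).
  move=> i hi; apply/negP => fi.
  have := Tmin i fi; rewrite leqNgt => /negP; apply.
  exact: leq_trans hi (leq_trunc_div _ _).
have [t [v [hs [dn [G hv hb]]]]] := blocks negB.
have [|t' [st ng nv]] := block_pos G hb.
  exists (T1 %% n)%N; first by rewrite ltn_pmod.
  by rewrite /B -divn_eq.
exists B, t'; split => //.
apply: le_trans (_ : ((v + size (LL B))%:R <= _)).
  by rewrite ler_nat.
rewrite natrD -addn1 natrD mulrDl mul1r; apply: lerD => //; exact: hS.
Qed.

End Branch2.


Definition allneg (Z : Type) (f : Z -> bool) (s : nat -> Z) (m : nat) : bool :=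
  [forall i : 'I_m, ~~ f (s i)].

Lemma allnegP (Z : Type) (f : Z -> bool) (s : nat -> Z) m :
  reflect (forall i, (i < m)%N -> ~~ f (s i)) (allneg f s m).
Proof.
apply: (iffP forallP) => [h i hi|h i]; last exact: h.
exact: (h (Ordinal hi)).
Qed.

Section Ser.
Variables (R : realType) (Z : Type) (f : Z -> bool) (s : nat -> Z).

Definition ser (K : R) (n : nat) : \bar R :=
  (\sum_(0 <= k <oo) (K * (allneg f s (n * k))%:R)%:E)%E.

Lemma ser_ge (K : R) n B : 0 <= K -> (forall i, (i < n * B)%N -> ~~ f (s i)) ->
  (((B.+1)%:R * K)%:E <= ser K n)%E.
Proof.
move=> K0 hneg.
apply: le_trans (nneseries_lim_ge B.+1 _); last first.
  by move=> k _ _; rewrite lee_fin mulr_ge0.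
rewrite sumEFin lee_fin.
have -> : \sum_(0 <= k < B.+1) (K * (allneg f s (n * k))%:R) = \sum_(0 <= k < B.+1) K.
  apply: eq_big_nat => k /andP [_ hk].
  have -> : allneg f s (n * k) by apply/allnegP => i hi; apply: hneg; apply: leq_trans hi _; rewrite leq_mul2l -ltnS hk orbT.
  by rewrite mulr1.
by rewrite sumr_const_nat subn0 mulr_natl.
Qed.

Lemma ser_inf (K : R) n : 0 < K -> (forall i, ~~ f (s i)) -> ser K n = +oo%E.
Proof.
move=> K0 hneg.
case E: (ser K n) => [r| |] //.
  have r0 : 0 <= r.
    by rewrite -lee_fin -E (le_trans _ (@ser_ge K n 0%N (ltW K0) (fun i _ => hneg i))) // lee_fin mul1r ltW.
  set B := Num.Def.archi_bound (r / K).
  have := @ser_ge K n B (ltW K0) (fun i _ => hneg i); rewrite E lee_fin => h.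
  have : r / K < B%:R by apply: archi_boundP; apply: divr_ge0 => //; apply: ltW.
  rewrite ltr_pdivrMr // => h2.
  have : B%:R * K < B.+1%:R * K by rewrite ltr_pM2r // ltr_nat.
  move=> h3; have := le_lt_trans h (lt_trans h2 h3); by rewrite ltxx.
have := @ser_ge K n 0%N (ltW K0) (fun i _ => hneg i); rewrite E.
by rewrite leeNy_eq.
Qed.

Lemma ser_le (K : R) k0 : 0 <= K -> f (s k0) -> (ser K 1 <= ((k0.+1)%:R * K)%:E)%E.
Proof.
move=> K0 fk.
rewrite /ser (nneseries_split 0 k0.+1); last by move=> k _; rewrite lee_fin mulr_ge0.
rewrite add0n eseries0 ?adde0; last first.
  move=> i hi _; have -> : allneg f s (1 * i) = false.
    by apply/negP => /allnegP /(_ k0); rewrite mul1n hi fk => /(_ isT).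
  by rewrite mulr0.
rewrite sumEFin lee_fin.
apply: le_trans (_ : \sum_(0 <= k < k0.+1) K <= _); last by rewrite sumr_const_nat subn0 mulr_natl.
apply: ler_sum => k _; rewrite -[X in _ <= X]mulr1 ler_wpM2l //.
by case: (allneg _ _ _).
Qed.

End Ser.

Section Costs.
Variables (R : realType) (Z : Type) (crew cver : R) (s : nat -> Z) (f : Z -> bool).
Hypothesis crew0 : 0 < crew.
Hypothesis cvge : crew <= cver.

Let cver0 : 0 < cver. Proof. exact: lt_le_trans crew0 cvge. Qed.

Lemma cost_lb1 (pi : policy Z) : (ser f s crew 1 <= cost crew cver pi s f)%E.
Proof.
rewrite /cost; apply/ereal_infP => _ [t _ <-] /=.
case E: (ps_stop _); last exact: leey.
have [nv [k kn fk]] := stop_inv E.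
apply: le_trans (@ser_le R Z f s crew k (ltW crew0) fk) _.
rewrite lee_fin.
apply: le_trans (_ : (ps_ngen (state_at pi s f t))%:R * crew <= _).
  by rewrite ler_wpM2r ?ler_nat // ltW.
by rewrite mulrC lerDl mulr_ge0 // ltW.
Qed.

Lemma cost_lb2 (pi : policy Z) : (cver%:E <= cost crew cver pi s f)%E.
Proof.
rewrite /cost; apply/ereal_infP => _ [t _ <-] /=.
case E: (ps_stop _); last exact: leey.
have [nv _] := stop_inv E.
rewrite lee_fin.
apply: le_trans (_ : cver * (ps_nver (state_at pi s f t))%:R <= _).
  by rewrite -[X in X <= _]mulr1 ler_wpM2l ?ler1n // ltW.
by rewrite lerDr mulr_ge0 // ltW.
Qed.

Variables (H : set (Z -> bool)) (sel : seq Z -> seq nat).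

Lemma cost_ub1 : ((cver / crew)%:E < star_number R H)%E ->
  (cost crew cver (ACS H crew cver sel) s f <= ser f s (crew + cver) 1)%E.
Proof.
move=> hc.
case: (pselect (exists i, f (s i))) => [ex|nex]; last first.
  rewrite ser_inf ?leey // ?addr_gt0 //.
  by move=> i; apply/negP => fi; apply: nex; exists i.
case: (ex_minnP ex) => T fT Tmin.
have hneg : forall i, (i < T)%N -> ~~ f (s i).
  by move=> i hi; apply/negP => /Tmin; rewrite leqNgt hi.
have [hs [dn [e c l a]]] := acs1 sel hc hneg.
have e2 := acs1_step hc e c l a.
apply: (@le_trans _ _ ((crew * (T.+1)%:R + cver * (T.+1)%:R)%:E)).
  apply: ereal_inf_lbound; exists (2 * T.+1)%N => //.
  by rewrite e2 /= fT.
apply: le_trans (@ser_ge R Z f s (crew + cver) 1 T _ _); last 2 first.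
- by rewrite addr_ge0 // ltW.
- by move=> i; rewrite mul1n; apply: hneg.
by rewrite lee_fin mulrDr ![_%:R * _]mulrC.
Qed.

Hypothesis hc : ~~ ((cver / crew)%:E < star_number R H)%E.
Hypothesis n_gt0 : (0 < cs_n H crew cver)%N.
Hypothesis hsel : forall pts, min_hitting H pts (sel pts).
Hypothesis Hf : H f.
Variable S : R.
Hypothesis hS : forall pts, ((size (sel pts))%:R <= S :> R).

Lemma cost_ub2 :
  (cost crew cver (ACS H crew cver sel) s f <=
   ser f s ((cs_n H crew cver)%:R * crew + S * cver) (cs_n H crew cver))%E.
Proof.
set n := cs_n H crew cver.
have S0 : 0 <= S by apply: le_trans (hS [::]).
case: (pselect (exists i, f (s i))) => [[T0 fT0]|nex]; last first.
  rewrite ser_inf ?leey //.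
    apply: (@lt_le_trans _ _ (n%:R * crew)); first by rewrite mulr_gt0 // ltr0n.
    by rewrite lerDl mulr_ge0 // ltW.
  by move=> i; apply/negP => fi; apply: nex; exists i.
have [B [t [negB st ng nv]]] := acs2_stop hc n_gt0 hsel Hf hS fT0.
apply: (@le_trans _ _ ((crew * (ps_ngen (state_at (ACS H crew cver sel) s f t))%:R +
   cver * (ps_nver (state_at (ACS H crew cver sel) s f t))%:R)%:E)).
  apply: ereal_inf_lbound; exists t => //=.
  by rewrite st.
apply: le_trans (@ser_ge R Z f s _ n B _ _); last 2 first.
- by rewrite addr_ge0 // mulr_ge0 // ltW.
- by move=> i hi; apply: negB; rewrite mulnC.
rewrite lee_fin ng mulrDr; apply: lerD.
  by rewrite natrM mulrC mulrA.
rewrite mulrA [X in _ <= X]mulrC; apply: ler_wpM2l => //; exact: ltW.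
Qed.

End Costs.


Lemma geo_eser (R : realType) (a r : R) : 0 <= r -> r < 1 ->
  (\sum_(0 <= k <oo) (a * r ^+ k)%:E)%E = (a / (1 - r))%:E.
Proof.
move=> r0 r1.
have hr : `|r| < 1 by rewrite ger0_norm.
have c := @cvg_geometric_series R a r hr.
rewrite (_ : (fun n => \sum_(0 <= k < n) (a * r ^+ k)%:E)%E = EFin \o series (geometric a r)).
  rewrite EFin_lim; last exact: is_cvg_geometric_series.
  by congr EFin; apply: norm_cvg_lim.
by apply/funext => N /=; rewrite sumEFin /series /=.
Qed.

Lemma le_int_nm (R : realType) (d : measure_display) (T : measurableType d)
  (mu : measure T R) (f g : T -> \bar R) :
  (forall x, (0 <= f x)%E) -> (forall x, (f x <= g x)%E) ->
  (\int[mu]_x f x <= \int[mu]_x g x)%E.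
Proof.
move=> f0 fg.
have g0 : forall x, (0 <= g x)%E by move=> x; exact: le_trans (f0 x) (fg x).
rewrite !ge0_integralTE //.
apply: ge_ereal_sup => _ [h hf <-]; apply: le_ereal_sup_tmp.
eexists; last exact: lexx.
exists h => // x; exact: le_trans (hf x) (fg x).
Qed.

Lemma lab_nth (Z : Type) (h : Z -> bool) (pts : seq Z) (z0 : Z) i :
  (i < size pts)%N -> lab h pts i = h (nth z0 pts i).
Proof. by move=> hi; rewrite /lab (drop_nth z0 hi). Qed.

Lemma star_of_hitting (Z : Type) (H : set (Z -> bool)) (pts : seq Z)
  (I : seq nat) (z0 : Z) : min_hitting H pts I -> is_star H (size I).
Proof.
case=> uI aI hI minI.
have key : forall a : 'I_(size I), exists h, H h /\
    forall j, j \in I -> lab h pts j = (j == nth 0 I a).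
  move=> a; set x := nth 0 I a.
  have xI : x \in I := mem_nth 0 (ltn_ord a).
  have nh : ~ hitting H pts (rem x I).
    move=> hit'.
    have := minI (rem x I) (rem_uniq _ uI) _ hit'.
    rewrite size_rem // => /(_ _) h.
    have : (size I <= (size I).-1)%N.
      apply: h; apply/allP => y /mem_rem; exact: (allP aI).
    have hs : ((size I).-1 < size I)%N.
      by rewrite ltn_predL (leq_ltn_trans (leq0n _) (ltn_ord a)).
    by move=> /leq_ltn_trans/(_ hs); rewrite ltnn.
  have [h hh] := not_all_ex_not _ _ nh.
  have [Hh hh'] := imply_to_and _ _ hh.
  have [ex nex] := imply_to_and _ _ hh'.
  exists h; split => //.
  have lx : forall j, j \in I -> j != x -> lab h pts j = false.
    move=> j jI jx; apply/negP => lj; apply: nex; exists j => //.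
    by rewrite (mem_rem_uniq _ uI) inE jx.
  move=> j jI; case: (eqVneq j x) => [->|jx]; last exact: lx.
  have [j' j'I lj'] := hI h Hh ex.
  case: (eqVneq j' x) => [<- //|j'x].
  by rewrite lx in lj'.
pose hf a := sval (cid (key a)).
exists (fun a => nth z0 pts (nth 0 I a)), hf; split.
  by move=> a; case: (svalP (cid (key a))).
move=> a b.
have bI : nth 0 I b \in I := mem_nth 0 (ltn_ord b).
have bs : (nth 0 I b < size pts)%N := allP aI _ bI.
case: (svalP (cid (key a))) => _ /(_ _ bI).
rewrite (lab_nth _ z0 bs) /hf => ->.
by rewrite nth_uniq // eq_sym.
Qed.


Lemma bern (R : realType) (x : R) n : 0 <= x -> x <= 1 ->
  n%:R * (1 - x) * x ^+ n <= 1 - x ^+ n.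
Proof.
move=> x0 x1; elim: n => [|n IH]; first by rewrite mul0r mul0r expr0 subrr.
have y0 : 0 <= x ^+ n := exprn_ge0 n x0.
have h : 0 <= (n.+1%:R * (1 - x) * x ^+ n) * (1 - x).
  by rewrite !mulr_ge0 // subr_ge0.
have h2 : 0 <= (1 - x) * x ^+ n by rewrite mulr_ge0 // subr_ge0.
rewrite exprS; move: h IH h2; rewrite -addn1 natrD; set y := x ^+ n => h IH h2.
nra.
Qed.

Section Meas.
Variables (R : realType) (d : measure_display) (Z : measurableType d)
  (D : probability Z R) (hstar : Z -> bool) (dO : measure_display)
  (Omega : measurableType dO) (P : probability Omega R) (X : nat -> Omega -> Z).
Hypothesis mpos : measurable [set z | hstar z].
Hypothesis mX : forall k, measurable_fun setT (X k).
Hypothesis hXD : forall k (A : set Z), measurable A -> P (X k @^-1` A) = D A.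
Hypothesis indep : mutually_independent P X.

Let neg := ~` [set z | hstar z].
Let mneg : measurable neg. Proof. exact: measurableC. Qed.

Definition pp := fine (D [set z | hstar z]).

Lemma Dpos_fin : D [set z | hstar z] = pp%:E.
Proof. by rewrite /pp fineK // fin_num_measure. Qed.

Lemma pp_ge0 : 0 <= pp.
Proof. by rewrite -lee_fin -Dpos_fin measure_ge0. Qed.

Lemma pp_le1 : pp <= 1.
Proof. by rewrite -lee_fin -Dpos_fin probability_le1. Qed.

Lemma Dneg : D neg = (1 - pp)%:E.
Proof. by rewrite probability_setC // Dpos_fin. Qed.

Definition Ev m := \bigcap_(i in [set: 'I_m]) (X (nat_of_ord i) @^-1` neg).

Lemma mEv m : measurable (Ev m).
Proof.
have -> : Ev m = \bigcap_(i in [set k | (k < m)%N]) (X i @^-1` neg).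
  apply/seteqP; split => w /= h i.
    by move=> hi; exact: (h (Ordinal hi)).
  by move=> _; apply: h; exact: ltn_ord.
apply: bigcap_measurableType => k _.
by have := mX k measurableT mneg; rewrite setTI.
Qed.

Lemma PEv m : P (Ev m) = ((1 - pp) ^+ m)%:E.
Proof.
rewrite /Ev (@indep m (fun i : 'I_m => nat_of_ord i) val_inj (fun _ => neg) (fun _ => mneg)).
rewrite (eq_bigr (fun _ => (1 - pp)%:E)); last by move=> i _; rewrite hXD // Dneg.
by rewrite prodEFin prodr_const card_ord.
Qed.

Lemma indicEv m w : \1_(Ev m) w = (allneg hstar (fun k => X k w) m)%:R :> R.
Proof.
rewrite indicE; suff -> : (w \in Ev m) = allneg hstar (X^~ w) m by [].

case: (boolP (allneg hstar (X^~ w) m)) => [/allnegP h|h].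
  by apply/mem_set => i _; apply/negP; apply: h; exact: ltn_ord.
apply/negbTE/negP => /set_mem hh; move/negP: h; apply.
by apply/allnegP => i hi; apply/negP; exact: (hh (Ordinal hi) I).
Qed.

Lemma int_ser (K : R) n : 0 <= K -> (0 < n)%N -> 0 < pp ->
  (\int[P]_w ser hstar (fun k => X k w) K n)%E = (K / (1 - (1 - pp) ^+ n))%:E.
Proof.
move=> K0 n0 p0.
transitivity (\int[P]_w \sum_(0 <= k <oo) (K * \1_(Ev (n * k)) w)%:E)%E.
  by apply: eq_integral => w _; apply: eq_eseriesr => k _; rewrite indicEv.
rewrite integral_nneseries //; last 2 first.
- move=> k; apply/measurable_realfun.measurable_EFinP; apply: measurable_realfun.measurable_funM.
    exact: measurable_cst.
  exact: measurable_realfun.measurable_indic (mEv _).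
- by move=> k w _; rewrite lee_fin mulr_ge0 // indicE ler0n.
transitivity (\sum_(0 <= k <oo) (K * ((1 - pp) ^+ n) ^+ k)%:E)%E.
  apply: eq_eseriesr => k _.
  under eq_integral => x _ do rewrite EFinM.
  rewrite ge0_integralZl_EFin //; last first.
    by apply/measurable_realfun.measurable_EFinP; exact: measurable_realfun.measurable_indic (mEv _).
  rewrite integral_indic ?mEv //.
  have -> : Ev (n * k) `&` [set: Omega] = Ev (n * k) by apply/seteqP; split => x // [].
  by rewrite -exprM EFinM; congr (_ * _)%E; exact: PEv.
  exact: mEv.
apply: geo_eser.
  by rewrite exprn_ge0 // subr_ge0 pp_le1.
by rewrite exprn_ilt1 ?subr_ge0 ?pp_le1 // ?gtrDl ?oppr_lt0 // -lt0n.
Qed.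

End Meas.

Unset Implicit Arguments.
Set Strict Implicit.

Theorem theorem4 (R : realType) (d : measure_display) (Z : measurableType d)
    (H : set (Z -> bool)) (crew cver : R)
    (D : probability Z R) (hstar : Z -> bool)
    (dO : measure_display) (Omega : measurableType dO)
    (P : probability Omega R) (X : nat -> Omega -> Z)
    (sel : seq Z -> seq nat) :
  H (fun _ => false) ->
  0 < crew -> crew <= cver ->
  H hstar ->
  measurable [set z | hstar z] ->
  (0 < D [set z | hstar z])%E ->
  (forall k, measurable_fun setT (X k)) ->
  (forall k (A : set Z), measurable A -> P (X k @^-1` A) = D A) ->
  mutually_independent P X ->
  (forall pts, min_hitting H pts (sel pts)) ->
  (exp_cost P X crew cver (ACS H crew cver sel) hstar
     <= 6%:E * Order.min (star_number R H) (cver / crew)%:E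
          * Jstar P X crew cver hstar)%E.
Proof.
move=> H0 crew0 cvge Hh mpos Dpos mX hXD indep hsel.
have cver0 : 0 < cver by apply: lt_le_trans crew0 cvge.
set c := cver / crew.
have c1 : 1 <= c by rewrite /c ler_pdivlMr // mul1r.
set p := pp D hstar.
have p0 : 0 < p by rewrite -lte_fin -(Dpos_fin D mpos).
have p1 : p <= 1 := @pp_le1 _ _ _ D hstar mpos.
have ep : 1 - (1 - p) ^+ 1 = p by rewrite expr1; ring.
have cost0 : forall (pol : policy Z) w, (0 <= cost crew cver pol (fun k => X k w) hstar)%E.
  move=> pol w; apply: le_trans (cost_lb2 _ _ crew0 cvge pol); by rewrite lee_fin ltW.
have LB : forall pol : policy Z, ((crew / p)%:E <= exp_cost P X crew cver pol hstar)%E /\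
                     (cver%:E <= exp_cost P X crew cver pol hstar)%E.
  move=> pol; split; rewrite /exp_cost.
    rewrite -ep -(int_ser mpos mX hXD indep (ltW crew0) (ltn0Sn 0) p0).
    apply: le_int_nm.
      by move=> w; apply: nneseries_ge0 => k _ _; rewrite lee_fin mulr_ge0 // ltW.
    by move=> w; apply: cost_lb1.
  apply: le_trans (_ : (\int[P]_w (cst cver%:E w) <= _)%E).
    rewrite integral_cst //; rewrite le_eqVlt; apply/orP; left; apply/eqP; rewrite -[LHS]mule1; congr (_ * _)%E.
    by symmetry; exact: probability_setT.
  apply: le_int_nm => w; first by rewrite lee_fin ltW.
  by apply: cost_lb2.
set M := Num.max (crew / p) cver.
have JM : (M%:E <= Jstar P X crew cver hstar)%E.
  apply/ereal_infP => _ [pol _ <-]; have [l1 l2] := LB pol.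
  by rewrite EFin_max ge_max l1 l2.
have M1 : crew / p <= M by rewrite le_max lexx.
have M2 : cver <= M by rewrite le_max lexx orbT.
have key : forall m : R, 0 <= m ->
    ((6 * m * M)%:E <= 6%:E * m%:E * Jstar P X crew cver hstar)%E.
  move=> m m0; rewrite !EFinM; apply: lee_wpmul2l => //.
  by rewrite -EFinM lee_fin mulr_ge0.
case: (boolP ((c)%:E < star_number R H)%E) => hc.
- rewrite (min_r (ltW hc)).
  apply: le_trans (key c (le_trans ler01 c1)).
  rewrite /exp_cost.
  apply: (@le_trans _ _ (\int[P]_w ser hstar (fun k => X k w) (crew + cver) 1)%E).
    apply: le_int_nm; first by move=> w; apply: cost0.
    by move=> w; apply: cost_ub1.
  rewrite (int_ser mpos mX hXD indep _ (ltn0Sn 0) p0) ?ep; last by rewrite addr_ge0 // ltW.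
  rewrite lee_fin.
  have e1 : (crew + cver) / p = crew / p + cver / p by rewrite mulrDl.
  have e2 : 6 * c * M >= 6 * c * (crew / p) by rewrite ler_wpM2l // mulr_ge0 // (le_trans ler01 c1).
  have e3 : 6 * c * (crew / p) = 6 * (cver / p).
    by rewrite /c; field; rewrite gt_eqF // gt_eqF.
  have e4 : crew / p <= cver / p by rewrite ler_pM2r // invr_gt0.
  have e5 : 0 <= cver / p by rewrite divr_ge0 // ltW.
  lra.
- have hc' : (star_number R H <= c%:E)%E by rewrite leNgt.
  have [zs hzs] : exists z, hstar z.
    apply: NNPP => nz; move: Dpos.
    rewrite (_ : [set z | hstar z] = set0) ?measure0 ?ltxx //.
    by apply/seteqP; split => z // hz; apply: nz; exists z.
  have s1 : (1%:E <= star_number R H)%E.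
    apply: ereal_sup_ubound; exists 1%N => //.
    exists (fun _ => zs), (fun _ => hstar); split => // i j.
    by rewrite !ord1 hzs eqxx.
  have sfin : star_number R H \is a fin_num.
    by rewrite ge0_fin_numE ?(le_trans _ s1) ?lee_fin // (le_lt_trans hc') ?ltey.
  set S := fine (star_number R H).
  have eS : star_number R H = S%:E by rewrite /S fineK.
  have S1 : 1 <= S by rewrite -lee_fin -eS.
  have Sc : S <= c by rewrite -lee_fin -eS.
  rewrite (min_l hc') eS.
  have hS : forall pts, ((size (sel pts))%:R <= S :> R).
    move=> pts; rewrite -lee_fin -eS; apply: ereal_sup_ubound.
    by exists (size (sel pts)) => //; exact: star_of_hitting zs (hsel pts).
  set n := cs_n H crew cver.
  have cS1 : 1 <= c * S by rewrite -[1]mulr1 ler_pM // ler01.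
  have [nlo nhi] : c * S <= n%:R /\ n%:R < c * S + 1.
    rewrite /n /cs_n -/c -/S.
    have z0 : 0 <= Num.ceil (c * S) by rewrite ceil_ge0 (lt_le_trans _ cS1) // ltrN10.
    rewrite natr_absz ger0_norm //.
    have /andP [h1 h2] := ceil_itv (c * S).
    split => //; move: h1; rewrite intrD /=; lra.
  have n0 : (0 < n)%N by rewrite -(ltr0n R) (lt_le_trans _ nlo) // (lt_le_trans ltr01 cS1).
  apply: le_trans (key S (le_trans ler01 S1)).
  rewrite /exp_cost.
  apply: (@le_trans _ _ (\int[P]_w ser hstar (fun k => X k w) (n%:R * crew + S * cver) n)%E).
    apply: le_int_nm; first by move=> w; apply: cost0.
    by move=> w; apply: cost_ub2 => //; apply: ltW.
  rewrite (int_ser mpos mX hXD indep _ n0 p0); last first.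
      by rewrite addr_ge0 // mulr_ge0 // ltW // (le_lt_trans _ (lt_le_trans ltr01 S1)).
    rewrite lee_fin.
    set A := (1 - p) ^+ n.
    have A0 : 0 <= A by rewrite exprn_ge0 // subr_ge0.
    have A1 : A < 1 by rewrite exprn_ilt1 ?subr_ge0 // -?lt0n // ?gtrDl ?oppr_lt0.
    have bn : n%:R * (1 - (1 - p)) * A <= 1 - A.
      by apply: bern; lra.
    rewrite (_ : 1 - (1 - p) = p) in bn; last by ring.
    rewrite ler_pdivrMr; last by lra.
    set K := n%:R * crew + S * cver.
    have M0 : 0 <= M by apply: le_trans M2; apply: ltW.
    have f1 : n%:R * crew <= S * cver + crew.
      apply: le_trans (_ : (c * S + 1) * crew <= _).
        by rewrite ler_wpM2r // ?ltW.
      rewrite le_eqVlt; apply/orP; left; apply/eqP.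
      by rewrite /c; field; rewrite gt_eqF.
    have f2 : S * cver <= S * M by rewrite ler_wpM2l // (le_trans ler01 S1).
    have f3 : crew <= M by apply: le_trans cvge M2.
    have f4 : M <= S * M by rewrite ler_peMl.
    have h1 : K <= 3 * S * M by rewrite /K; lra.
    have f5 : S * cver <= n%:R * crew.
      rewrite (_ : S * cver = (c * S) * crew); last by rewrite /c; field; rewrite gt_eqF.
      by rewrite ler_wpM2r // ltW.
    have h2 : K <= 2 * (n%:R * crew) by rewrite /K; lra.
    have h3 : crew <= p * M by rewrite mulrC -ler_pdivrMr.
    have g1 : K * (1 - A) <= 3 * S * M * (1 - A) by rewrite ler_wpM2r // subr_ge0 ltW.
    have g2 : K * A <= 2 * (n%:R * crew) * A by rewrite ler_wpM2r.
    have g3 : n%:R * crew * A <= n%:R * (p * M) * A.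
      by rewrite ler_wpM2r // ler_wpM2l.
    have g5 : M * (n%:R * p * A) <= M * (1 - A) by rewrite ler_wpM2l.
    have g6 : 0 <= (S - 1) * M * (1 - A) by rewrite !mulr_ge0 // subr_ge0 // ltW.
    have S0 : 0 <= S by lra.
    have g7 : 0 <= S * M * (1 - A) by rewrite !mulr_ge0 // subr_ge0 ltW.
    have eK : K = K * (1 - A) + K * A by ring.
    rewrite eK.
    nra.
Qed.
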